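(* Let $n\ge4$ and $1\le d\le\lfloor n/2\rfloor$, and let $\mathcal{M}_{2,d}$ be the maximum size of a $d$-intersecting family in $\mathbb{G}_2(n,2d)$. Then $\mathcal{M}_{2,d}<2^n-1$.
   Context: $\mathbb{G}_2(n,k)$ denotes the set of all $k$-dimensional subspaces of $\mathbb{F}_2^n$. A family $\mathcal{F}$ of subspaces is $\lambda$-intersecting if $\dim(X\cap Y)=\lambda$ for all distinct $X,Y\in\mathcal{F}$. *)

(* Defs.v *)
From HB Require Import structures.
From mathcomp Require Import all_boot all_algebra.
Set Implicit Arguments. Unset Strict Implicit. Unset Printing Implicit Defensive.
Import GRing.Theory.
Local Open Scope ring_scope.

Notation F2n n := 'rV['F_2]_n.

Definition in_Grass (n k : nat) (X : {vspace F2n n}) : bool := (\dim X == k)%N.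

Definition lam_intersecting (n lam : nat) (F : seq {vspace F2n n}) : Prop :=
  forall X Y, X \in F -> Y \in F -> X != Y -> \dim (X :&: Y)%VS = lam.
Arguments in_Grass n k X : clear implicits.
Arguments lam_intersecting n lam F : clear implicits.

(* Main.v *)
Require Import Defs.
From mathcomp Require Import all_boot all_algebra.
From mathcomp Require Import all_order all_field.
From mathcomp Require Import zify ring lra.
Set Implicit Arguments. Unset Strict Implicit. Unset Printing Implicit Defensive.
Import GRing.Theory Num.Theory Order.TTheory.

Lemma arith (n d b c : nat) : (4 <= n)%N -> (1 <= d)%N -> 2 ^ d = b + 1 -> 2 ^ n = c + 1 ->
  (b * (b + 2) * (b * (b + 2)) + b <= b * c + b * (b + 2))%N ->
  (c * b < b * (b + 2) * (b * (b + 2)))%N -> False.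
Proof.
move=> n4 d1 ed en h1 h2.
have b1 : (1 <= b)%N.
  have : (2 ^ 1 <= 2 ^ d)%N by rewrite leq_exp2l.
  rewrite ed; lia.
have h1' : ((b + 2) * (b + 2) + 1 <= c + (b + 2))%N.
  rewrite -(leq_pmul2l b1); nia.
have h2' : (c < (b + 2) * (b * (b + 2)))%N.
  rewrite -(ltn_pmul2l b1); nia.
have e3 : 2 ^ (d * 3) = (b + 1) ^ 3 by rewrite expnM ed.
have lo : (2 ^ (d * 3) <= 2 ^ n)%N by rewrite e3 en; nia.
have hi : (2 ^ n < 2 ^ (d * 3).+1)%N by rewrite expnS e3 en; nia.
rewrite leq_exp2l // in lo; rewrite ltn_exp2l // in hi.
have nd : n = d * 3 by lia.
move: en; rewrite nd e3 => en.
have bb : b = 1 by nia.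
have : 2 ^ d = 2 ^ 1 by rewrite ed bb.
move/eqP; rewrite eqn_exp2l // => /eqP dd.
lia.
Qed.

Section Aux.
Local Open Scope ring_scope.
Lemma rank_bound (m N : nat) (M : 'M[rat]_(m, N)) :
  (forall u : 'rV_m, u *m M = 0 -> u = 0) -> (m <= N)%N.
Proof.
move=> H; have : row_free M.
  rewrite -kermx_eq0; apply/eqP/row_matrixP => i; rewrite row0.
  by apply: H; rewrite -row_mul mulmx_ker row0.
by move/eqP=> <-; apply: rank_leq_col.
Qed.

Lemma sum_ind (T : finType) (P B : {set T}) : B \subset P ->
  \sum_(p in P) ((p \in B)%:R : rat) = #|B|%:R.
Proof.
move=> sBP; rewrite (bigID (mem B)) /= [X in _ + X]big1 ?addr0; last first.
  by move=> p /andP[_ /negbTE ->].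
rewrite (eq_bigr (fun _ => 1)); last by move=> p /andP[_ ->].
rewrite sumr_const; congr (_ %:R); apply: eq_card => p; rewrite /= ?inE.
by case pB: (p \in B); rewrite unfold_in /= pB ?andbF ?andbT //; apply: (subsetP sBP).
Qed.

Section Gram.
Variables (T : finType) (P : {set T}) (m k l : nat) (A : nat -> {set T}).
Hypothesis sAP : forall i, (i < m)%N -> A i \subset P.
Hypothesis cA : forall i, (i < m)%N -> #|A i| = k.
Hypothesis cAA : forall i j, (i < m)%N -> (j < m)%N -> i != j -> #|A i :&: A j| = l.

Lemma gram (u : 'I_m -> rat) (x : rat) :
  \sum_(p in P) (\sum_(i < m) u i * (p \in A i)%:R + x) ^+ 2 =
  (k%:R - l%:R) * \sum_(i < m) u i ^+ 2 + l%:R * (\sum_(i < m) u i) ^+ 2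
  + 2 * k%:R * x * \sum_(i < m) u i + #|P|%:R * x ^+ 2.
Proof.
have E1 : forall p, (\sum_(i < m) u i * (p \in A i)%:R + x) ^+ 2 =
   \sum_(i < m) \sum_(j < m) u i * u j * (p \in A i :&: A j)%:R
   + 2 * x * \sum_(i < m) u i * (p \in A i)%:R + x ^+ 2.
  move=> p; rewrite sqrrD expr2 big_distrl /=; congr (_ + _ + _); last first.
    by rewrite -mulr_natl; ring.
  apply: eq_bigr => i _; rewrite big_distrr /=; apply: eq_bigr => j _.
  rewrite inE; case: (p \in A i); case: (p \in A j); rewrite /= ?mulr0 ?mul0r ?mulr1 //.

rewrite (eq_bigr _ (fun p _ => E1 p)) !big_split /= sumr_const.
have S1 : \sum_(p in P) 2 * x * \sum_(i0 < m) u i0 * (p \in A i0)%:R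
    = 2 * k%:R * x * \sum_(i < m) u i.
  rewrite -big_distrr /= exchange_big /= (eq_bigr (fun i => k%:R * u i)).
    by rewrite -big_distrr /=; ring.
  by move=> i _; rewrite -big_distrr /= sum_ind ?cA ?sAP // mulrC.
have S2 : forall j : 'I_m, \sum_(p in P) \sum_(j0 < m) u j * u j0 * (p \in A j :&: A j0)%:R
    = \sum_(j0 < m) u j * u j0 * (l%:R + (k%:R - l%:R) * (j == j0)%:R).
  move=> i; rewrite exchange_big /=; apply: eq_bigr => j _.
  rewrite -big_distrr /= sum_ind; last by apply: subset_trans (sAP (ltn_ord i)); apply: subsetIl.
  case: eqP => [<- | /eqP ij].
    by rewrite setIid cA // mulr1 addrC subrK.
  by rewrite cAA // ?mulr0 ?addr0 // (inj_eq val_inj).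
rewrite exchange_big /= (eq_bigr _ (fun j _ => S2 j)) S1 -[x ^+ 2 *+ _]mulr_natr.
have -> : \sum_(i < m) \sum_(j < m) u i * u j * (l%:R + (k%:R - l%:R) * (i == j)%:R)
  = l%:R * (\sum_(i < m) u i) ^+ 2 + (k%:R - l%:R) * \sum_(i < m) u i ^+ 2.
  rewrite expr2 big_distrl big_distrr big_distrr -big_split /=; apply: eq_bigr => i _.
  rewrite (eq_bigr (fun j => l%:R * (u i * u j) + (k%:R - l%:R) * u i * (u j * (i == j)%:R))); last first.
    by move=> j _; ring.
  have E  : \sum_(j < m) u j * (i == j)%:R = u i.
    rewrite (bigD1 i) //= eqxx mulr1 big1 ?addr0 //.
    by move=> j /negbTE; rewrite eq_sym => ->; rewrite mulr0.
  rewrite big_split /= -!big_distrr /= E; ring.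
ring.
Qed.

Lemma gram_ge0 (u : 'I_m -> rat) (x : rat) :
  0 <= (k%:R - l%:R) * \sum_(i < m) u i ^+ 2 + l%:R * (\sum_(i < m) u i) ^+ 2
  + 2 * k%:R * x * \sum_(i < m) u i + #|P|%:R * x ^+ 2.
Proof. by rewrite -gram; apply: sumr_ge0 => p _; apply: sqr_ge0. Qed.

Lemma cs_bound : (0 < #|P|)%N -> (0 < m)%N ->
  (m%:R * (k%:R ^+ 2 - l%:R * #|P|%:R) <= (k%:R - l%:R) * #|P|%:R :> rat).
Proof.
move=> P0 m0; have := gram_ge0 (fun _ => #|P|%:R) (- (k%:R * m%:R)).
rewrite !sumr_const card_ord -[_ ^+ 2 *+ m]mulr_natr -[#|P|%:R *+ m]mulr_natr.
set N : rat := #|P|%:R; set M : rat := m%:R; set K : rat := k%:R; set L : rat := l%:R.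
have hM : 0 <= M by rewrite ler0n.
have hN : 0 <= N by rewrite ler0n.
have -> : (K - L) * (N ^+ 2 * M) + L * (N * M) ^+ 2 + 2 * K * - (K * M) * (N * M) + N * (- (K * M)) ^+ 2
   = (N * M) * ((K - L) * N - M * (K ^+ 2 - L * N)) by ring.
have [NM0|hNM] := eqVneq (N * M) 0.
  move=> _; move: NM0 => /eqP; rewrite mulf_eq0 => /orP[/eqP N0|/eqP M0].
  - by move: P0; rewrite -(ltr0n rat) -/N N0 ltxx.
  - by move: m0; rewrite -(ltr0n rat) -/M M0 ltxx.
rewrite pmulr_rge0 ?subr_ge0 //.
by rewrite lt0r hNM mulr_ge0.
Qed.

Lemma fisher : (0 < l)%N -> (l < k)%N -> (k * k <= #|P| * l)%N -> (m < #|P|)%N.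
Proof.
move=> l0 lk kkN.
pose M : 'M[rat]_(m.+1, #|P|) :=
  \matrix_(i, c) (if (i < m)%N then ((enum_val c) \in A i)%:R else 1).
apply: (rank_bound (M := M)) => u uM0.
pose v (i : 'I_m) := u 0 (widen_ord (leqnSn m) i); pose x := u 0 ord_max.
have Z : \sum_(p in P) (\sum_(i < m) v i * (p \in A i)%:R + x) ^+ 2 = 0.
  rewrite big_enum_val /=; apply: big1 => c _.
  have := congr1 (fun w : 'rV[rat]_#|P| => w 0 c) uM0; rewrite !mxE big_ord_recr /= => H.
  transitivity ((0 : rat) ^+ 2); last by rewrite expr2 mul0r.
  rewrite -{2}H; congr (_ ^+ 2); congr (_ + _).
    by apply: eq_bigr => i _; rewrite mxE /= ltn_ord.
  by rewrite mxE ltnn mulr1.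
rewrite gram in Z.
set S2 := \sum_(i < m) v i ^+ 2 in Z; set S := \sum_(i < m) v i in Z.
have S2ge : 0 <= S2 by apply: sumr_ge0 => i _; apply: sqr_ge0.
have hL : (0 : rat) < l%:R by rewrite ltr0n.
have hKL : (0 : rat) < k%:R - l%:R by rewrite subr_gt0 ltr_nat.
have hKK : k%:R * k%:R <= #|P|%:R * l%:R :> rat by rewrite -!natrM ler_nat.
have hN : (0 : rat) < #|P|%:R.
  rewrite ltr0n lt0n; apply/negP => /eqP P0; move: kkN; rewrite P0 mul0n leqn0 muln_eq0 orbb.
  by move/eqP=> k0; move: lk; rewrite k0.
set Q := (_ + _ + _ + _) in Z.
have EQ : l%:R * Q = l%:R * (k%:R - l%:R) * S2 + (l%:R * S + k%:R * x) ^+ 2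
     + (#|P|%:R * l%:R - k%:R * k%:R) * x ^+ 2 by rewrite /Q; ring.
have T0 : 0 <= l%:R * (k%:R - l%:R) * S2 by rewrite !mulr_ge0 // ltW.
have T1 : 0 <= (l%:R * S + k%:R * x) ^+ 2 :> rat by apply: sqr_ge0.
have T2 : 0 <= (#|P|%:R * l%:R - k%:R * k%:R) * x ^+ 2 :> rat.
  by rewrite mulr_ge0 ?sqr_ge0 // subr_ge0.
rewrite Z mulr0 in EQ.
have S20 : S2 = 0.
  have : l%:R * (k%:R - l%:R) * S2 = 0 :> rat by lra.
  by move/eqP; rewrite !mulf_eq0 (gt_eqF hL) (gt_eqF hKL) /= => /eqP.
have v0 : forall i, v i = 0.
  move=> i; apply/eqP; rewrite -sqrf_eq0; apply/eqP.
  by move/psumr_eq0P: S20 => ->// j _; apply: sqr_ge0.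
have S0 : S = 0 by rewrite /S big1.
have x0 : x = 0.
  move: Z; rewrite /Q S20 S0 !mulr0 !addr0 add0r => /eqP.
  by rewrite mulf_eq0 (gt_eqF hN) sqrf_eq0 => /eqP.
apply/rowP => j; rewrite mxE.
have [jm|jm] := ltnP j m.
  by have := v0 (Ordinal jm); rewrite /v; congr (u 0 _ = 0); apply: val_inj.
by move: x0; rewrite /x; congr (u 0 _ = 0); apply: val_inj => /=; have := ltn_ord j; lia.
Qed.
End Gram.



Definition nz n (X : {vspace F2n n}) : {set F2n n} := [set p | (p \in X) && (p != 0)].

Lemma card_nz n (X : {vspace F2n n}) : #|nz X| = (2 ^ \dim X - 1)%N.
Proof.
have -> : nz X = [set p | p \in X] :\ 0.
  by apply/setP => p; rewrite !inE andbC.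
have := cardsD1 0 [set p | p \in X]; rewrite !inE mem0v cardsE card_vspace card_Fp //.
by move=> ->; rewrite add1n subn1.
Qed.

Lemma nz_cap n (X Y : {vspace F2n n}) : nz X :&: nz Y = nz (X :&: Y)%VS.
Proof.
apply/setP => p; rewrite !inE memv_cap.
by case: (p \in X); case: (p \in Y); case: (p != 0).
Qed.

End Aux.

Theorem proposition5 (n d : nat) :
  (4 <= n)%N -> (1 <= d)%N -> (d <= n./2)%N ->
  forall F : seq {vspace F2n n},
    uniq F ->
    (forall X, X \in F -> in_Grass n (2 * d) X) ->
    lam_intersecting n d F ->
    (size F < 2 ^ n - 1)%N.
Proof.
move=> n4 d1 _ F uF GF IF.
set m := size F.
have Bge : (2 ^ 4 <= 2 ^ n)%N by rewrite leq_exp2l.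
have [m0|m0] := posnP m; first by rewrite m0; lia.
pose P : {set F2n n} := [set~ 0%R].
have cP : #|P| = (2 ^ n - 1)%N.
  by rewrite cardsC1 card_mx card_Fp // mul1n subn1.
pose A i := nz (nth 0%VS F i).
have sAP : forall i, (i < m)%N -> A i \subset P.
  by move=> i _; apply/subsetP => p; rewrite !inE => /andP[].
have cA : forall i, (i < m)%N -> #|A i| = (2 ^ (2 * d) - 1)%N.
  move=> i im; rewrite card_nz; have := GF _ (mem_nth 0%VS im).
  by rewrite /in_Grass => /eqP ->.
have cAA : forall i j, (i < m)%N -> (j < m)%N -> i != j -> #|A i :&: A j| = (2 ^ d - 1)%N.
  move=> i j im jm ij; rewrite /A nz_cap card_nz IF //; try exact: mem_nth.
  by rewrite nth_uniq.
set k := (2 ^ (2 * d) - 1)%N in cA; set l := (2 ^ d - 1)%N in cAA.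
pose a := (2 ^ d)%N.
have a2 : (2 <= a)%N by rewrite -[X in (X <= _)%N]expn1 leq_exp2l.
have ka : (2 ^ (2 * d) = a * a)%N by rewrite mulnC expnM.
rewrite -cP.
have [kk|kk] := leqP (k * k) (#|P| * l).
  apply: (fisher sAP cA cAA) => //; rewrite /l /k -/a ?ka; nia.
have P0 : (0 < #|P|)%N by rewrite cP; lia.
have cs := cs_bound sAP cA cAA P0 m0.
have csn : (m * k * k + l * #|P| <= m * l * #|P| + k * #|P|)%N.
  rewrite -(ler_nat rat) !natrD !natrM; move: cs; set M : rat := (m%:R)%R; set K : rat := (k%:R)%R;
    set L : rat := (l%:R)%R; set N : rat := (#|P|%:R)%R; move=> cs; lra.
rewrite ltnNge; apply/negP => mN.
have st2 : (k * k + l <= l * #|P| + k)%N.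
  clear cs; rewrite -mulnA in csn; move: mN csn kk P0; clearbody k l; generalize #|P| => N.
  move: (k * k) => K mN csn kk P0.
  have h : (N * K + m * (N * l) <= m * K + N * (N * l))%N.
    rewrite -(subnKC mN); have := leq_mul (leqnn (m - N)) (ltnW kk).
    rewrite !mulnDl; lia.
  rewrite -(leq_pmul2l P0); nia.
move: st2 kk; rewrite /k /l -/a ka; clear ka.
have ad : (2 ^ d = a)%N by []; move: ad; clearbody a => ad st2 kk; move: st2 kk ad.
case: a a2 => // b _ st2 kk ad.
have e1 : (b.+1 * b.+1 - 1 = b * (b + 2))%N by rewrite mulSnr mulnSr; lia.
rewrite e1 subn1 /= in st2 kk.
apply: (@arith n d b (#|P|)) => //.
- by rewrite addn1.
- by rewrite cP addn1 subn1 prednK // expn_gt0.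
Qed.
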